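(* For $n\geqslant 5$ let $F_n$ be the tournament on $\{0,\ldots,n-1\}$ whose arcs are the pairs $(i,j)$ with $j\geqslant i+2$ together with the pairs $(i,i-1)$ for $1\leqslant i\leqslant n-1$. Then: (1) for every $n\geqslant 5$, $F_n$ is indecomposable; (2) for every $n\geqslant 6$, every vertex of $F_n$ other than $0$ and $n-1$ is critical, and $0$ and $n-1$ are not critical; (3) for every $n\geqslant 10$, $F_n$ has no strongly critical vertex.
   Context: A tournament $T=(V,A)$: finite vertex set, and for all distinct $x,y$ exactly one of $(x,y),(y,x)$ is an arc; write $x\to y$ for $(x,y)\in A$. For $X\subseteq V$, $T[X]$ is the induced subtournament and $T-x=T[V\setminus\{x\}]$. An interval of $T$ is $I\subseteq V$ such that for every $x\in V\setminus I$, either $x\to a$ for all $a\in I$ or $a\to x$ for all $a\in I$; trivial intervals are $\varnothing$, $V$, singletons; $T$ (with $\geqslant 3$ vertices) is indecomposable if all its intervals are trivial, decomposable otherwise. A vertex $x$ of an indecomposable tournament $T$ is critical if $T-x$ is decomposable. For an indecomposable tournament $T$ with at least $5$ vertices, a vertex $x$ is strongly critical if for every $X\subseteq V(T)$ with $x\in X$, $|X|\geqslant 5$ and $T[X]$ indecomposable, $x$ is a critical vertex of $T[X]$. *)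

(* Defs.v *)
From mathcomp Require Import all_boot.
Set Warnings "-notation-overridden".
Set Implicit Arguments. Unset Strict Implicit. Unset Printing Implicit Defensive.

(* Induced subtournaments T[X] are represented by
   the vertex subset X : {set T} (the arc relation is restricted to X). *)

Definition is_interval (T : finType) (arc : rel T) (X I : {set T}) : Prop :=
  I \subset X /\
  forall x, x \in X :\: I ->
    (forall a, a \in I -> arc x a) \/ (forall a, a \in I -> arc a x).

Definition trivial_subset (T : finType) (X I : {set T}) : Prop :=
  I = set0 \/ I = X \/ exists a, I = [set a].

Definition indecomposable (T : finType) (arc : rel T) (X : {set T}) : Prop :=
  3 <= #|X| /\ forall I : {set T}, is_interval arc X I -> trivial_subset X I.

Definition decomposable (T : finType) (arc : rel T) (X : {set T}) : Prop :=
  3 <= #|X| /\ exists I : {set T}, is_interval arc X I /\ ~ trivial_subset X I.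

Definition critical (T : finType) (arc : rel T) (X : {set T}) (x : T) : Prop :=
  indecomposable arc X /\ x \in X /\ decomposable arc (X :\ x).

Definition strongly_critical (T : finType) (arc : rel T) (X : {set T}) (x : T)
  : Prop :=
  indecomposable arc X /\ 5 <= #|X| /\ x \in X /\
  forall Y : {set T}, Y \subset X -> x \in Y -> 5 <= #|Y| ->
    indecomposable arc Y -> critical arc Y x.

Definition F_arc (n : nat) : rel 'I_n :=
  fun i j => ((val i).+2 <= val j) || (val i == (val j).+1).
Arguments F_arc n : clear implicits.

(* Main.v *)
Require Import Defs.
Set Warnings "-notation-overridden".
From mathcomp Require Import all_boot.
From mathcomp Require Import zify.

Ltac sl := simpl in *; lia.

Definition segm n lo hi : {set 'I_n.+1} := [set k : 'I_n.+1 | lo <= k <= hi].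

Lemma inordV n k : k <= n -> val (inord k : 'I_n.+1) = k.
Proof. by move=> h; apply: inordK. Qed.

Lemma segm_card n lo hi : hi <= n -> (hi - lo).+1 <= #|segm n lo hi| \/ hi < lo.
Proof.
move=> hn; case: (leqP lo hi) => hl; last by right.
left.
have -> : (hi - lo).+1 = #|[set (inord (lo + val k) : 'I_n.+1) | k : 'I_(hi - lo).+1]|.
  rewrite card_imset ?card_ord //.
  move=> a b; have := ltn_ord a; have := ltn_ord b => hb ha /(congr1 val) /=.
  rewrite !inordV /=; try lia.
  by move=> h; apply: val_inj => /=; lia.
apply: subset_leq_card; apply/subsetP => x /imsetP [k _ ->].
have hk := ltn_ord k; rewrite inE inordV /=; lia.
Qed.

Lemma key n lo hi : lo + 4 <= hi -> hi <= n -> indecomposable (F_arc n.+1) (segm n lo hi).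
Proof.
move=> hlh hn; split.
  case: (@segm_card n lo hi hn) => h; last lia. apply: leq_trans h; lia.
move=> I [sub H].
have inX : forall k : 'I_n.+1, k \in I -> lo <= k <= hi.
  by move=> k kI; have := subsetP sub k kI; rewrite inE.
case: (leqP #|I| 1) => hI.
  move: hI; case e: #|I| => [|[|k]] // _.
    by left; apply: cards0_eq.
  by right; right; apply/cards1P; rewrite e.
right; left.
have [a [b [aI bI ab]]] := card_gt1P hI.
case: (arg_minnP (fun i : 'I_n.+1 => val i) aI) => m mI mmin.
case: (arg_maxnP (fun i : 'I_n.+1 => val i) aI) => M MI Mmax.
have mM : val m < val M.
  move: ab; rewrite -(inj_eq val_inj) => ab.
  simpl in ab.
  have := mmin b bI; have := Mmax b bI; have := mmin a aI; have := Mmax a aI.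
  rewrite /=; lia.
have hm := inX m mI; have hM := inX M MI.
have notI : forall c, lo <= c <= hi -> (inord c : 'I_n.+1) \notin I ->
    forall a : 'I_n.+1, a \in I -> forall b : 'I_n.+1, b \in I ->
    F_arc n.+1 (inord c) a = false -> F_arc n.+1 b (inord c) = false -> False.
  move=> c hc cI a0 a0I b0 b0I f1 f2.
  have cX : (inord c : 'I_n.+1) \in segm n lo hi :\: I.
    by rewrite inE cI inE inordV //; lia.
  case: (H _ cX) => h.
    by rewrite h in f1.
  by rewrite h in f2.
have m_lo : val m = lo.
  apply/eqP; rewrite eqn_leq; apply/andP; split; last by sl.
  rewrite leqNgt; apply/negP => hlt.
  apply: (notI m.-1 _ _ m mI M MI).
  - sl.
  - apply/negP => h; have := mmin _ h; rewrite inordV; sl.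
  - rewrite /F_arc inordV; sl.
  - rewrite /F_arc inordV; sl.
have M_hi : val M = hi.
  apply/eqP; rewrite eqn_leq; apply/andP; split; first by sl.
  rewrite leqNgt; apply/negP => hlt.
  apply: (notI M.+1 _ _ m mI M MI).
  - sl.
  - apply/negP => h; have := Mmax _ h; rewrite inordV; sl.
  - rewrite /F_arc inordV; sl.
  - rewrite /F_arc inordV; sl.
have gen : forall c, lo <= c <= hi -> c != lo.+1 -> c != hi.-1 -> (inord c : 'I_n.+1) \in I.
  move=> c hc c1 c2.
  case: (boolP (inord c \in I)) => // cI; exfalso.
  apply: (notI c hc cI m mI M MI); rewrite /F_arc inordV; sl.
have lo1 : (inord lo.+1 : 'I_n.+1) \in I.
  case: (boolP (inord lo.+1 \in I)) => // cI; exfalso.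
  have h2 := gen lo.+2 ltac:(sl) ltac:(sl) ltac:(sl).
  apply: (notI lo.+1 ltac:(sl) cI _ h2 m mI); rewrite /F_arc !inordV; sl.
have hi1 : (inord hi.-1 : 'I_n.+1) \in I.
  case: (boolP (inord hi.-1 \in I)) => // cI; exfalso.
  have h2 := gen hi.-2 ltac:(sl) ltac:(sl) ltac:(sl).
  apply: (notI hi.-1 ltac:(sl) cI _ MI _ h2); rewrite /F_arc !inordV; sl.
apply/setP => k; rewrite inE; apply/idP/idP; first by move/inX.
move=> hk.
have -> : k = inord k by apply/val_inj; rewrite inordV //; have := ltn_ord k; sl.
case: (eqVneq (val k) lo.+1) => [->//|e1].
case: (eqVneq (val k) hi.-1) => [->//|e2].
by apply: gen.
Qed.

Lemma indec_dec (T : finType) (arc : rel T) X :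
  indecomposable arc X -> decomposable arc X -> False.
Proof. by move=> [_ H] [_ [J [HJ nt]]]; apply: nt; apply: H. Qed.
Arguments indec_dec {T arc X}.

Lemma segmD_lo n lo hi (i : 'I_n.+1) : val i = lo -> segm n lo hi :\ i = segm n lo.+1 hi.
Proof.
move=> e; apply/setP => k; rewrite !inE -(inj_eq val_inj) /=.
have := ltn_ord k; sl.
Qed.

Lemma segmD_hi n lo hi (i : 'I_n.+1) : val i = hi -> lo < hi -> segm n lo hi :\ i = segm n lo hi.-1.
Proof.
move=> e l; apply/setP => k; rewrite !inE -(inj_eq val_inj) /=.
have := ltn_ord k; sl.
Qed.

Lemma segmT n : [set: 'I_n.+1] = segm n 0 n.
Proof. apply/setP => k; rewrite !inE; have := ltn_ord k; sl. Qed.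

Lemma part1 n : 5 <= n -> indecomposable (F_arc n) [set: 'I_n].
Proof.
case: n => [//|n] hn; rewrite segmT; apply: key; lia.
Qed.

Theorem mainTheorem5 :
  (forall n : nat, 5 <= n -> indecomposable (F_arc n) [set: 'I_n])
  /\
  (forall n : nat, 6 <= n ->
     forall i : 'I_n,
       (critical (F_arc n) [set: 'I_n] i <-> (0 < val i /\ val i < n.-1)))
  /\
  (forall n : nat, 10 <= n ->
     forall i : 'I_n, ~ strongly_critical (F_arc n) [set: 'I_n] i).
Proof.
split; first exact: part1.
split.
  case=> [//|n] hn i /=; split.
    move=> [_ [_ dec]].
    have hi := ltn_ord i.
    case: (posnP (val i)) => h0.
      exfalso; apply: (indec_dec _ dec).
      rewrite segmT segmD_lo //; apply: key; lia.
    case: (ltngtP (val i) n) => h1; [by split; sl | sl |].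
    exfalso; apply: (indec_dec _ dec).
    rewrite segmT segmD_hi //; [apply: key; lia | lia].
  move=> [h0 h1]; split; first by apply: part1; sl.
  split; first by rewrite in_setT.
  split.
    have := cardsD1 i [set: 'I_n.+1]; rewrite cardsT card_ord in_setT /=; lia.
  have hn' := ltn_ord i.
  case: (leqP 2 (val i)) => h2.
    exists [set k : 'I_n.+1 | val k < val i]; split.
      split.
        apply/subsetP => k; rewrite !inE -(inj_eq val_inj) /=; sl.
      move=> x; rewrite !inE -(inj_eq val_inj) /= => hx; right => a.
      rewrite inE /F_arc => ha; sl.
    have h0' : (inord 0 : 'I_n.+1) \in [set k : 'I_n.+1 | val k < val i].
      by rewrite inE inordV.
    have h1' : (inord 1 : 'I_n.+1) \in [set k : 'I_n.+1 | val k < val i].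
      by rewrite inE inordV //; sl.
    have hn'' : (inord n : 'I_n.+1) \in [set: 'I_n.+1] :\ i.
      by rewrite !inE -(inj_eq val_inj) /= inordV //; sl.
    case=> [e|[e|[a e]]].
    - by move: h0'; rewrite e inE.
    - by move: hn''; rewrite -e inE inordV //; sl.
    - move: h0' h1'; rewrite e !inE => /eqP <- /eqP/(congr1 val); rewrite !inordV; sl.
  exists [set k : 'I_n.+1 | val i < val k]; split.
    split.
      apply/subsetP => k; rewrite !inE -(inj_eq val_inj) /=; sl.
    move=> x; rewrite !inE -(inj_eq val_inj) /= => hx; left => a.
    rewrite inE /F_arc => ha; sl.
  have h0' : (inord n : 'I_n.+1) \in [set k : 'I_n.+1 | val i < val k].
    by rewrite inE inordV //; sl.
  have h1' : (inord n.-1 : 'I_n.+1) \in [set k : 'I_n.+1 | val i < val k].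
    by rewrite inE inordV //; sl.
  have hn'' : (inord 0 : 'I_n.+1) \in [set: 'I_n.+1] :\ i.
    by rewrite !inE -(inj_eq val_inj) /= inordV //; sl.
  case=> [e|[e|[a e]]].
  - by move: h0'; rewrite e inE.
  - by move: hn''; rewrite -e inE inordV //; sl.
  - move: h0' h1'; rewrite e !inE => /eqP <- /eqP/(congr1 val); rewrite !inordV; sl.
case=> [//|n] hn i [_ [_ [_ Hsc]]].
have hi := ltn_ord i.
case: (leqP (val i + 5) n) => h5.
  have hk := @key n i.+1 (i + 5) ltac:(sl) h5.
  have [_ [_ dec]] := Hsc (segm n i (i + 5)) (subsetT _) ltac:(rewrite inE; sl)
     ltac:(case: (@segm_card n i (i+5) h5) => h; [apply: leq_trans h; sl | sl])
     (@key n i (i+5) ltac:(sl) h5).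
  apply: (indec_dec _ dec); rewrite segmD_lo //.
have hk := @key n (i - 5) i.-1 ltac:(sl) ltac:(sl).
have [_ [_ dec]] := Hsc (segm n (i - 5) i) (subsetT _) ltac:(rewrite inE; sl)
   ltac:(case: (@segm_card n (i - 5) i ltac:(sl)) => h; [apply: leq_trans h; sl | sl])
   (@key n (i - 5) i ltac:(sl) ltac:(sl)).
apply: (indec_dec _ dec); rewrite segmD_hi //; sl.
Qed.
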